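(* For all $\boldsymbol\mu,\boldsymbol\mu'\in\mathcal P(\mathcal X\times[K])$ and every collection $\boldsymbol\pi=(\pi_k)_{k\in[K]}$ of decision rules $\pi_k:\mathcal X\times\mathcal P(\mathcal X\times[K])\to\mathcal P(\mathcal U)$ with $|\pi_k(x,\boldsymbol\mu_1)-\pi_k(x,\boldsymbol\mu_2)|_1\le L_Q|\boldsymbol\mu_1-\boldsymbol\mu_2|_1$ for all $x,k,\boldsymbol\mu_1,\boldsymbol\mu_2$, $$\sum_{k\in[K]}|r_k^{\mathrm{MF}}(\boldsymbol\mu,\boldsymbol\pi)-r_k^{\mathrm{MF}}(\boldsymbol\mu',\boldsymbol\pi)|\le S_R|\boldsymbol\mu-\boldsymbol\mu'|_1,\qquad S_R=M_R(1+L_Q)+L_R(2+L_Q).$$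
   Context: $K\ge1$, $[K]=\{1,\dots,K\}$, $\mathcal X,\mathcal U$ finite, $\mathcal P(A)$ the probability distributions on $A$, $|\cdot|_1$ the $L_1$ norm, $M_R,L_R,L_Q>0$. For each $k$, $r_k:\mathcal X\times\mathcal U\times\mathcal P(\mathcal X\times[K])\times\mathcal P(\mathcal U\times[K])\to\mathbb R$ satisfies $|r_k(x,u,\boldsymbol\mu_1,\boldsymbol\nu_1)|\le M_R$ and $|r_k(x,u,\boldsymbol\mu_1,\boldsymbol\nu_1)-r_k(x,u,\boldsymbol\mu_2,\boldsymbol\nu_2)|\le L_R(|\boldsymbol\mu_1-\boldsymbol\mu_2|_1+|\boldsymbol\nu_1-\boldsymbol\nu_2|_1)$ for all arguments. Define $\nu^{\mathrm{MF}}(\boldsymbol\mu,\boldsymbol\pi)(u,k)=\sum_x\pi_k(x,\boldsymbol\mu)(u)\boldsymbol\mu(x,k)$ and $r_k^{\mathrm{MF}}(\boldsymbol\mu,\boldsymbol\pi)=\sum_{x\in\mathcal X}\sum_{u\in\mathcal U}\boldsymbol\mu(x,k)\pi_k(x,\boldsymbol\mu)(u)\,r_k(x,u,\boldsymbol\mu,\nu^{\mathrm{MF}}(\boldsymbol\mu,\boldsymbol\pi))$. *)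

(* Defs.v *)
From HB Require Import structures.
From mathcomp Require Import all_boot all_order all_algebra.
From mathcomp Require Import reals.
Set Implicit Arguments. Unset Strict Implicit. Unset Printing Implicit Defensive.
Import Order.TTheory GRing.Theory Num.Theory.
Local Open Scope ring_scope.

Definition is_distr (R : realType) (T : finType) (p : {ffun T -> R}) : Prop :=
  (forall t, 0 <= p t) /\ \sum_(t : T) p t = 1.

Definition l1dist (R : realType) (T : finType) (p q : {ffun T -> R}) : R :=
  \sum_(t : T) `|p t - q t|.

Definition nuMF (R : realType) (X U : finType) (K : nat)
  (pi : 'I_K -> X -> {ffun X * 'I_K -> R} -> {ffun U -> R})
  (mu : {ffun X * 'I_K -> R}) : {ffun U * 'I_K -> R} :=
  [ffun uk : U * 'I_K => \sum_(x : X) pi uk.2 x mu uk.1 * mu (x, uk.2)].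

Definition rMF (R : realType) (X U : finType) (K : nat)
  (r : 'I_K -> X -> U -> {ffun X * 'I_K -> R} -> {ffun U * 'I_K -> R} -> R)
  (pi : 'I_K -> X -> {ffun X * 'I_K -> R} -> {ffun U -> R})
  (k : 'I_K) (mu : {ffun X * 'I_K -> R}) : R :=
  \sum_(x : X) \sum_(u : U) mu (x, k) * pi k x mu u * r k x u mu (nuMF pi mu).

(* Main.v *)
Require Import Defs.
From HB Require Import structures.
From mathcomp Require Import all_boot all_order all_algebra.
From mathcomp Require Import reals.
From mathcomp Require Import ring lra.
Import Order.TTheory GRing.Theory Num.Theory.
Local Open Scope ring_scope.

Lemma sum_pair (R : realType) (X : finType) (K : nat) (F : X -> 'I_K -> R) :
  \sum_(t : X * 'I_K) F t.1 t.2 = \sum_(k < K) \sum_(x : X) F x k.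
Proof. by rewrite exchange_big pair_big. Qed.

Lemma sum_pairf (R : realType) (X : finType) (K : nat) (f : {ffun X * 'I_K -> R}) :
  \sum_(t : X * 'I_K) f t = \sum_(k < K) \sum_(x : X) f (x, k).
Proof. rewrite -(@sum_pair R X K (fun x k => f (x, k))). by apply: eq_bigr => -[]. Qed.

Lemma key (R : realType) (a a' p p' s s' M Ls : R) :
  0 <= p -> 0 <= a' -> 0 <= p' -> `|s| <= M -> `|s - s'| <= Ls ->
  `|a * p * s - a' * p' * s'| <= `|a - a'| * p * M + a' * `|p - p'| * M + a' * p' * Ls.
Proof.
move=> hp ha' hp' hs hss.
have -> : a * p * s - a' * p' * s' = (a - a') * p * s + a' * (p - p') * s + a' * p' * (s - s') by ring.
apply: (le_trans (ler_normD _ _)); apply: lerD; first apply: (le_trans (ler_normD _ _)); first apply: lerD.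
- rewrite !normrM (ger0_norm hp); apply: ler_wpM2l => //; exact: mulr_ge0.
- rewrite !normrM (ger0_norm ha'); apply: ler_wpM2l => //; exact: mulr_ge0.
- rewrite !normrM (ger0_norm ha') (ger0_norm hp'); apply: ler_wpM2l => //; exact: mulr_ge0.
Qed.

Lemma nu_distr (R : realType) (X U : finType) (K : nat)
  (pi : 'I_K -> X -> {ffun X * 'I_K -> R} -> {ffun U -> R})
  (mu : {ffun X * 'I_K -> R}) :
  (forall k x, is_distr (pi k x mu)) -> is_distr mu -> is_distr (nuMF pi mu).
Proof.
move=> hpi hmu; split.
  move=> [u k]; rewrite ffunE; apply: sumr_ge0 => x _.
  by apply: mulr_ge0; [case: (hpi k x) | case: hmu].
rewrite sum_pairf -(proj2 hmu) sum_pairf; apply: eq_bigr => k _.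
under eq_bigr do rewrite ffunE /=.
rewrite exchange_big /=; apply: eq_bigr => x _.
by rewrite -mulr_suml (proj2 (hpi k x)) mul1r.
Qed.

Lemma nu_l1 (R : realType) (X U : finType) (K : nat) (L_Q : R)
  (pi : 'I_K -> X -> {ffun X * 'I_K -> R} -> {ffun U -> R})
  (mu mu' : {ffun X * 'I_K -> R}) :
  (forall k x, is_distr (pi k x mu)) -> is_distr mu' ->
  (forall k x, l1dist (pi k x mu) (pi k x mu') <= L_Q * l1dist mu mu') ->
  l1dist (nuMF pi mu) (nuMF pi mu') <= (1 + L_Q) * l1dist mu mu'.
Proof.
move=> hpi hmu' hlip.
set D := l1dist mu mu'.
have hD : D = \sum_(k < K) \sum_(x : X) `|mu (x, k) - mu' (x, k)|.
  by rewrite /D /l1dist -(@sum_pair R X K (fun x k => `|mu (x, k) - mu' (x, k)|));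
     apply: eq_bigr => -[].
have hS : \sum_(k < K) \sum_(x : X) mu' (x, k) = 1.
  by rewrite -(proj2 hmu') sum_pairf.
rewrite /l1dist (_ : \sum_t _ = \sum_(k < K) \sum_(u : U) `|nuMF pi mu (u, k) - nuMF pi mu' (u, k)|); last first.
  by rewrite -(@sum_pair R U K (fun u k => `|nuMF pi mu (u, k) - nuMF pi mu' (u, k)|)); apply: eq_bigr => -[].
apply: (@le_trans _ _ (\sum_(k < K) \sum_(x : X)
   (`|mu (x, k) - mu' (x, k)| + mu' (x, k) * (L_Q * D)))).
  apply: ler_sum => k _.
  apply: (@le_trans _ _ (\sum_(u : U) \sum_(x : X)
     (pi k x mu u * `|mu (x, k) - mu' (x, k)| + `|pi k x mu u - pi k x mu' u| * mu' (x, k)))).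
    apply: ler_sum => u _; rewrite !ffunE /= -sumrB.
    apply: (le_trans (ler_norm_sum _ _ _)); apply: ler_sum => x _.
    have -> : pi k x mu u * mu (x, k) - pi k x mu' u * mu' (x, k) =
      pi k x mu u * (mu (x, k) - mu' (x, k)) + (pi k x mu u - pi k x mu' u) * mu' (x, k) by ring.
    apply: (le_trans (ler_normD _ _)); rewrite !normrM (ger0_norm (proj1 (hpi k x) u))
      (ger0_norm (proj1 hmu' (x, k))); done.
  rewrite exchange_big; apply: ler_sum => x _.
  rewrite big_split /= -mulr_suml (proj2 (hpi k x)) mul1r lerD2l -mulr_suml mulrC.
  by apply: ler_wpM2l; [exact: (proj1 hmu') | exact: hlip].
rewrite (eq_bigr (fun k => \sum_(x : X) `|mu (x, k) - mu' (x, k)| + (\sum_(x : X) mu' (x, k)) * (L_Q * D))); last first.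
  by move=> k _; rewrite big_split /= mulr_suml.
rewrite big_split /= -mulr_suml hS -hD; lra.
Qed.

Theorem lemma3 (R : realType) (X U : finType) (K : nat) (hK : (1 <= K)%N)
  (M_R L_R L_Q : R) (hM : 0 < M_R) (hLR : 0 < L_R) (hLQ : 0 < L_Q)
  (r : 'I_K -> X -> U -> {ffun X * 'I_K -> R} -> {ffun U * 'I_K -> R} -> R)
  (r_bound : forall k x u mu nu, is_distr mu -> is_distr nu ->
      `|r k x u mu nu| <= M_R)
  (r_lip : forall k x u mu1 nu1 mu2 nu2,
      is_distr mu1 -> is_distr nu1 -> is_distr mu2 -> is_distr nu2 ->
      `|r k x u mu1 nu1 - r k x u mu2 nu2| <=
        L_R * (l1dist mu1 mu2 + l1dist nu1 nu2))
  (mu mu' : {ffun X * 'I_K -> R}) (hmu : is_distr mu) (hmu' : is_distr mu')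
  (pi : 'I_K -> X -> {ffun X * 'I_K -> R} -> {ffun U -> R})
  (pi_distr : forall k x m, is_distr m -> is_distr (pi k x m))
  (pi_lip : forall k x m1 m2, is_distr m1 -> is_distr m2 ->
      l1dist (pi k x m1) (pi k x m2) <= L_Q * l1dist m1 m2) :
  \sum_(k < K) `|rMF r pi k mu - rMF r pi k mu'| <=
    (M_R * (1 + L_Q) + L_R * (2 + L_Q)) * l1dist mu mu'.
Proof.
set D := l1dist mu mu'.
have hpi : forall k x, is_distr (pi k x mu) by move=> k x; exact: pi_distr.
have hpi' : forall k x, is_distr (pi k x mu') by move=> k x; exact: pi_distr.
have hnu := @nu_distr R X U K pi mu hpi hmu.
have hnu' := @nu_distr R X U K pi mu' hpi' hmu'.
have hN : l1dist (nuMF pi mu) (nuMF pi mu') <= (1 + L_Q) * D.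
  apply: (@nu_l1 R X U K L_Q pi mu mu' hpi hmu') => k x; exact: pi_lip.
have hD : D = \sum_(k < K) \sum_(x : X) `|mu (x, k) - mu' (x, k)|.
  by rewrite /D /l1dist -(@sum_pair R X K (fun x k => `|mu (x, k) - mu' (x, k)|));
     apply: eq_bigr => -[].
have hS : \sum_(k < K) \sum_(x : X) mu' (x, k) = 1.
  by rewrite -(proj2 hmu') sum_pairf.
have hD0 : 0 <= D by apply: sumr_ge0 => t _.
set Ls := L_R * (D + (1 + L_Q) * D).
set c := M_R * L_Q * D + L_R * (2 + L_Q) * D.
apply: (@le_trans _ _ (\sum_(k < K) \sum_(x : X)
   (M_R * `|mu (x, k) - mu' (x, k)| + mu' (x, k) * c))); last first.
  rewrite (eq_bigr (fun k => M_R * \sum_(x : X) `|mu (x, k) - mu' (x, k)| + (\sum_(x : X) mu' (x, k)) * c)); last first.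
    by move=> k _; rewrite big_split /= mulr_suml mulr_sumr.
  rewrite big_split /= -mulr_sumr -mulr_suml hS -hD /c; rewrite le_eqVlt; apply/orP; left; apply/eqP; ring.
apply: ler_sum => k _.
rewrite /rMF -sumrB; apply: (le_trans (ler_norm_sum _ _ _)); apply: ler_sum => x _.
rewrite -sumrB; apply: (le_trans (ler_norm_sum _ _ _)).
apply: (@le_trans _ _ (\sum_(u : U) (`|mu (x, k) - mu' (x, k)| * pi k x mu u * M_R
   + mu' (x, k) * `|pi k x mu u - pi k x mu' u| * M_R + mu' (x, k) * pi k x mu' u * Ls))).
  apply: ler_sum => u _; apply: key.
  - exact: (proj1 (hpi k x)).
  - exact: (proj1 hmu').
  - exact: (proj1 (hpi' k x)).
  - exact: r_bound.
  - apply: (le_trans (r_lip _ _ _ _ _ _ _ hmu hnu hmu' hnu')).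
    by rewrite /Ls; apply: ler_wpM2l; [exact: ltW | rewrite lerD2l].
rewrite !big_split /= -!mulr_suml -!mulr_sumr (proj2 (hpi k x)) (proj2 (hpi' k x)) !mulr1.
have hl := pi_lip k x mu mu' hmu hmu'; rewrite /l1dist -/D in hl.
have hm0 := proj1 hmu' (x, k).
apply: (@le_trans _ _ (`|mu (x, k) - mu' (x, k)| * M_R + mu' (x, k) * (L_Q * D) * M_R + mu' (x, k) * Ls)).
  rewrite lerD2r lerD2l; apply: ler_wpM2r; [exact: ltW | exact: ler_wpM2l].
rewrite le_eqVlt; apply/orP; left; apply/eqP; rewrite /Ls /c; ring.
Qed.
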